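(* Let $m\geq 1$, let $\zeta=\zeta_m$ be a primitive $m$th root of unity, let $C_m$ be cyclic of order $m$ with generator $c$, and consider the cyclic Wedderburn embedding \[ \omega_m\colon\mathbb{Z}[\zeta]C_m\to\prod_{j\in[0,m-1]}\mathbb{Z}[\zeta],\qquad c\mapsto(\zeta^j)_{j\in[0,m-1]}. \] Then: (i) $G_{\zeta^{-1}}^{\mathrm{T}}\,V_{\zeta}\,G_{\zeta^{-1}}=m\,(D_{\zeta^{-1}})^{-1}$, and this is a diagonal matrix whose $(i+1)$st diagonal entry, $i\in[0,m-1]$, equals \[ \frac{m\,\zeta^{(i^2)}}{\prod_{j\in[1,i]}(1-\zeta^j)}. \] (ii) The image of $\omega_m$ is \[ \Bigl\{(y_j)_{j\in[0,m-1]}\in\prod_{j\in[0,m-1]}\mathbb{Z}[\zeta]\;\Bigm|\;\sum_{j\in[i,m-1]}y_j\begin{bmatrix}j\\ i\end{bmatrix}_{\zeta^{-1}}\in\mathbb{Z}[\zeta]\cdot\frac{m}{\prod_{j\in[1,i]}(1-\zeta^j)}\ \text{for all }i\in[0,m-1]\Bigr\}, \] where the membership is taken inside $\mathbb{Q}(\zeta)$. (iii) A $\mathbb{Z}[\zeta]$-linear basis of the image of $\omega_m$ is given by the elements, indexed by $j\in[0,m-1]$, \[ \Bigl((-1)^k\zeta^{\binom{k}{2}}\frac{m}{\prod_{l\in[1,j]}(1-\zeta^l)}\begin{bmatrix}j\\ k\end{bmatrix}_{\zeta}\Bigr)_{k\in[0,m-1]}\in\prod_{k\in[0,m-1]}\mathbb{Z}[\zeta].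 \]
   Context: For an indeterminate $q$ and integers $i\ge0$, $j\in\mathbb{Z}$: $[i]=(q^i-1)/(q-1)$, $[i]!=\prod_{k=1}^i[k]$ (so $[0]!=1$), and the Gaussian binomial $\begin{bmatrix}i\\ j\end{bmatrix}=\begin{bmatrix}i\\ j\end{bmatrix}_q=[i]!/([j]![i-j]!)$ if $j\in[0,i]$ and $0$ otherwise; specializing $q$ to a root of unity gives the values written with subscript. The $m\times m$ matrices (rows and columns indexed by $[0,m-1]$) are $G_q=(\begin{bmatrix}i\\ j\end{bmatrix})_{i,j}$, $V_q=(q^{ij})_{i,j}$, and $D_q$ the diagonal matrix with $i$th entry $[i]!\,(q-1)^i\,q^{\binom{i}{2}}$; $^{\mathrm T}$ denotes transpose. Interval $[a,b]=\{x\in\mathbb{Z}:a\le x\le b\}$. *)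

(* Defs.v *)
(* ambient field: algC (algebraic complex numbers), which contains
   Q(zeta) for every root of unity zeta. *)
From mathcomp Require Import all_boot all_order all_algebra all_field.
Set Implicit Arguments. Unset Strict Implicit. Unset Printing Implicit Defensive.
Import GRing.Theory Num.Theory.
Local Open Scope ring_scope.

Definition qint_poly (i : nat) : {poly rat} := \sum_(k < i) 'X^k.
Definition qfact_poly (i : nat) : {poly rat} := \prod_(1 <= k < i.+1) qint_poly k.
(* Gaussian binomial [i]!/([j]! [i-j]!) if j in [0,i], else 0 (it is a polynomial) *)
Definition gbinom_poly (i j : nat) : {poly rat} :=
  if (j <= i)%N then qfact_poly i %/ (qfact_poly j * qfact_poly (i - j)) else 0.

Definition qfact (q : algC) (i : nat) : algC := (map_poly ratr (qfact_poly i)).[q].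
Definition gbinom (q : algC) (i j : nat) : algC := (map_poly ratr (gbinom_poly i j)).[q].

Definition Gmx (m : nat) (q : algC) : 'M[algC]_m := \matrix_(i < m, j < m) gbinom q i j.
Definition Vmx (m : nat) (q : algC) : 'M[algC]_m := \matrix_(i < m, j < m) q ^+ (i * j).
Definition Dmx (m : nat) (q : algC) : 'M[algC]_m :=
  diag_mx (\row_(i < m) (qfact q i * (q - 1) ^+ i * q ^+ 'C(i, 2))).

Definition in_Zzeta (z x : algC) : Prop := exists p : {poly int}, x = (map_poly intr p).[z].

(* cyclic Wedderburn embedding: the element sum_k a_k c^k of Z[zeta]C_m
   (a_k in Z[zeta]) is sent to (sum_k a_k (zeta^j)^k)_{j in [0,m-1]} *)
Definition omega (m : nat) (z : algC) (a : 'I_m -> algC) (j : 'I_m) : algC :=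
  \sum_(k < m) a k * (z ^+ j) ^+ k.

Definition omega_image (m : nat) (z : algC) (y : 'I_m -> algC) : Prop :=
  exists a : 'I_m -> algC, (forall k, in_Zzeta z (a k)) /\ (forall j, y j = omega z a j).

(* Main.v *)
Require Import Defs.
From mathcomp Require Import all_boot all_order all_algebra all_field.
From mathcomp Require Import ring zify.
From Stdlib Require Import ClassicalEpsilon.
Import GRing.Theory Num.Theory.
Local Open Scope ring_scope.
Set Warnings "-notation-overridden -ambiguous-paths".
Section GB.
Local Notation f := qfact_poly.
Local Notation Q := gbinom_poly.
Local Notation I := qint_poly.

Lemma f0 : f 0 = 1.
Proof. by rewrite /qfact_poly big_geq. Qed.

Lemma fS n : f n.+1 = f n * I n.+1.
Proof. by rewrite /qfact_poly big_nat_recr. Qed.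

Lemma ID a b : I (a + b) = I a + 'X^a * I b.
Proof.
rewrite /qint_poly big_split_ord /= mulr_sumr; congr (_ + _).
by apply: eq_bigr => i _; rewrite exprD.
Qed.

Lemma I_neq0 k : (0 < k)%N -> I k != 0.
Proof.
move=> k0; apply/eqP => h.
have : ('X^k - 1 : {poly rat}).[0] = 0 by rewrite subrX1 -/(qint_poly k) h mulr0 horner0.
rewrite hornerD hornerN hornerXn hornerC expr0n eqn0Ngt k0 /= sub0r => /eqP; by rewrite oppr_eq0 oner_eq0.
Qed.

Lemma f_neq0 n : f n != 0.
Proof.
elim: n => [|n IH]; first by rewrite f0 oner_eq0.
by rewrite fS mulf_neq0 // I_neq0.
Qed.

Lemma Quniq n k P : (k <= n)%N -> P * (f k * f (n - k)) = f n -> Q n k = P.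
Proof.
move=> kn E; rewrite /gbinom_poly kn -E mulpK //.
by rewrite mulf_neq0 // f_neq0.
Qed.

Lemma Qgt n k : (n < k)%N -> Q n k = 0.
Proof. by move=> h; rewrite /gbinom_poly leqNgt h. Qed.

Lemma stepA n k : (forall k, (k <= n)%N -> Q n k * (f k * f (n - k)) = f n) ->
  (k <= n)%N -> (Q n k + 'X^(k.+1) * Q n k.+1) * (f k.+1 * f (n - k)) = f n.+1.
Proof.
move=> ex kn; have E1 := ex k kn.
rewrite [f n.+1]fS.
have -> : I n.+1 = I k.+1 + 'X^(k.+1) * I (n - k) by rewrite -ID; congr I; lia.
case: (ltnP k n) => kn'.
  have E2 := ex k.+1 kn'.
  have e2 : f (n - k) = f (n - k.+1) * I (n - k).
    have -> : (n - k = (n - k.+1).+1)%N by lia.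
    by rewrite fS.
  transitivity (Q n k * (f k * f (n - k)) * I k.+1 +
     'X^(k.+1) * (Q n k.+1 * (f k.+1 * f (n - k.+1))) * I (n - k)).
    rewrite [f k.+1]fS e2; ring.
  rewrite E1 E2; ring.
have ? : k = n by lia. subst k.
have I0 : I 0 = 0 by rewrite /qint_poly big_ord0.
rewrite (@Qgt n n.+1) // mulr0 addr0 fS -{2}E1 subnn f0 I0; ring.
Qed.

Lemma Qexact n k : (k <= n)%N -> Q n k * (f k * f (n - k)) = f n.
Proof.
elim: n k => [|n IH] k kn.
  have -> : k = 0%N by lia.
  by rewrite (@Quniq 0 0 1) // f0 !mul1r.
case: k kn => [|k] kn.
  by rewrite (@Quniq _ _ 1) // f0 subn0 !mul1r.
rewrite subSS (@Quniq _ _ (Q n k + 'X^(k.+1) * Q n k.+1)) //; last first.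
  by rewrite -subSS; apply: stepA.
by rewrite stepA.
Qed.

Lemma QA n k : Q n.+1 k.+1 = Q n k + 'X^(k.+1) * Q n k.+1.
Proof.
case: (leqP k n) => kn; last by rewrite !Qgt // ?mulr0 ?addr0 //; lia.
by apply: Quniq => //; rewrite subSS; apply: stepA => // j; apply: Qexact.
Qed.

Lemma QB n k : Q n.+1 k.+1 = 'X^(n - k) * Q n k + Q n k.+1.
Proof.
case: (leqP k n) => kn; last by rewrite !Qgt // ?mulr0 ?addr0 //; lia.
apply: Quniq => //; rewrite subSS.
have E1 := Qexact n k kn.
rewrite [f n.+1]fS.
have -> : I n.+1 = I (n - k) + 'X^(n - k) * I k.+1 by rewrite -ID; congr I; lia.
case: (ltnP k n) => kn'.
  have E2 := Qexact n k.+1 kn'.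
  have e2 : f (n - k) = f (n - k.+1) * I (n - k).
    have -> : (n - k = (n - k.+1).+1)%N by lia.
    by rewrite fS.
  transitivity ('X^(n - k) * (Q n k * (f k * f (n - k))) * I k.+1 +
     (Q n k.+1 * (f k.+1 * f (n - k.+1))) * I (n - k)).
    rewrite [f k.+1]fS e2; ring.
  rewrite E1 E2; ring.
have ? : k = n by lia. subst k.
have I0 : I 0 = 0 by rewrite /qint_poly big_ord0.
rewrite (@Qgt n n.+1) // addr0 fS -{2}E1 subnn f0 I0; ring.
Qed.

Lemma Qn0 n : Q n 0 = 1.
Proof. by apply: Quniq => //; rewrite f0 subn0 !mul1r. Qed.

End GB.
Section Eval.
Variable q : algC.
Local Notation g := (gbinom q).

Lemma evD (p r : {poly rat}) : (map_poly ratr (p + r)).[q] = (map_poly ratr p).[q] + (map_poly ratr r).[q] :> algC.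
Proof. by rewrite rmorphD hornerD. Qed.

Lemma evXM n (p : {poly rat}) : (map_poly ratr ('X^n * p)).[q] = q ^+ n * (map_poly ratr p).[q] :> algC.
Proof. by rewrite rmorphM /= (map_polyXn (@ratr algC)) hornerM hornerXn. Qed.

Lemma gA n k : g n.+1 k.+1 = g n k + q ^+ k.+1 * g n k.+1.
Proof. by rewrite /gbinom QA evD evXM. Qed.

Lemma gB n k : g n.+1 k.+1 = q ^+ (n - k) * g n k + g n k.+1.
Proof. by rewrite /gbinom QB evD evXM. Qed.

Lemma gn0 n : g n 0 = 1.
Proof. by rewrite /gbinom Qn0 rmorph1 hornerC. Qed.

Lemma ggt n k : (n < k)%N -> g n k = 0.
Proof. by move=> h; rewrite /gbinom Qgt // rmorph0 horner0. Qed.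

Lemma gnn n : g n n = 1.
Proof.
elim: n => [|n IH]; first by rewrite gn0.
by rewrite gA IH ggt // mulr0 addr0.
Qed.

Lemma qfactS n : qfact q n.+1 = qfact q n * \sum_(k < n.+1) q ^+ k.
Proof.
rewrite /qfact fS rmorphM hornerM; congr (_ * _).
by rewrite /qint_poly rmorph_sum horner_sum; apply: eq_bigr => i _; rewrite /= (map_polyXn (@ratr algC)) hornerXn.
Qed.

Lemma qfact0 : qfact q 0 = 1.
Proof. by rewrite /qfact f0 rmorph1 hornerC. Qed.

End Eval.
Section RU.
Variables (m : nat) (z : algC).
Hypotheses (hm : (0 < m)%N) (hz : m.-primitive_root z).
Local Notation q := (z^-1).

Lemma z_neq0 : z != 0.
Proof.
apply/eqP => h; have := prim_expr_order hz; rewrite h expr0n.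
by case: m hm => // n _ /eqP; rewrite eq_sym oner_eq0.
Qed.

Lemma qz : q * z = 1.
Proof. by rewrite mulVf // z_neq0. Qed.

Lemma qpow n : q ^+ n * z ^+ n = 1.
Proof. by rewrite -exprMn qz expr1n. Qed.

Lemma zpow n : z ^+ n * q ^+ n = 1.
Proof. by rewrite mulrC qpow. Qed.

Lemma zm : z ^+ m = 1.
Proof. exact: prim_expr_order hz. Qed.

Lemma qm : q ^+ m = 1.
Proof. by rewrite exprVn zm invr1. Qed.

Lemma z_neq1 k : (0 < k < m)%N -> z ^+ k != 1.
Proof.
move=> /andP[k0 km]; rewrite -(prim_order_dvd hz).
by apply/negP => /dvdn_leq => /(_ k0); rewrite leqNgt km.
Qed.

Lemma q_neq1 k : (0 < k < m)%N -> q ^+ k != 1.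
Proof.
move=> h; apply/eqP => e; move/eqP: (z_neq1 k h); apply.
by rewrite -(qpow k) e mul1r.
Qed.

Lemma prod_nat_neq0 (a b : nat) (F : nat -> algC) :
  (forall l, (a <= l < b)%N -> F l != 0) -> \prod_(a <= l < b) F l != 0.
Proof.
move=> h; rewrite prodf_seq_neq0; apply/allP => l; rewrite mem_index_iota => hl /=.
exact: h.
Qed.

Definition Pz j := \prod_(1 <= l < j.+1) (1 - z ^+ l).
Definition Eq j := \prod_(1 <= l < j.+1) (1 - q ^+ l).
Definition Uq j := \prod_(1 <= l < j.+1) (- q ^+ l).
Definition Uz j := \prod_(1 <= l < j.+1) (- z ^+ l).

Lemma Pz_neq0 j : (j < m)%N -> Pz j != 0.
Proof.
move=> jm; rewrite /Pz; apply: prod_nat_neq0 => l /andP[l1 lj].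
by rewrite subr_eq0 eq_sym z_neq1 // l1 /=; apply: leq_trans jm.
Qed.

Lemma Eq_neq0 j : (j < m)%N -> Eq j != 0.
Proof.
move=> jm; rewrite /Eq; apply: prod_nat_neq0 => l /andP[l1 lj].
by rewrite subr_eq0 eq_sym q_neq1 // l1 /=; apply: leq_trans jm.
Qed.

Lemma Uq_neq0 j : Uq j != 0.
Proof.
rewrite /Uq; apply: prod_nat_neq0 => l _.
by rewrite oppr_eq0 expf_neq0 // invr_eq0 z_neq0.
Qed.

Lemma EUP j : Eq j = Uq j * Pz j.
Proof.
rewrite /Eq /Uq /Pz -big_split /=; apply: eq_bigr => l _.
by rewrite mulrBr mulr1 mulNr qpow opprK addrC.
Qed.

Lemma UU j : Uq j * Uz j = 1.
Proof.
rewrite /Uq /Uz -big_split /= big1 // => l _.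
by rewrite mulrNN qpow.
Qed.

Lemma orth (i s : nat) : (i < m)%N -> (s < m)%N ->
  \sum_(j < m) (z ^+ i * q ^+ s) ^+ j = if i == s then m%:R else 0.
Proof.
move=> im sm; case: eqP => [->|ne].
  by rewrite zpow (eq_bigr (fun _ => 1)) ?sumr_const ?card_ord // => j _; rewrite expr1n.
set r := z ^+ i * q ^+ s.
have r1 : r != 1.
  apply/eqP => h; apply: ne.
  have : z ^+ i = z ^+ s by rewrite -[z ^+ i]mulr1 -(qpow s) mulrA -/r h mul1r.
  move/eqP; rewrite (eq_prim_root_expr hz) !modn_small //; exact/eqP.
have rm : r ^+ m = 1 by rewrite exprMn -!exprM mulnC exprM zm expr1n mulnC exprM qm expr1n mulr1.
have := subrX1 r m; rewrite rm subrr => /esym /eqP; rewrite mulf_eq0 subr_eq0 (negbTE r1) /=.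
by move/eqP.
Qed.

Definition ee b s := (-1) ^+ s * z ^+ 'C(s, 2) * gbinom z b s.

Lemma ee_gt b s : (b < s)%N -> ee b s = 0.
Proof. by move=> h; rewrite /ee ggt // mulr0. Qed.

Lemma ee0 b : ee b 0 = 1.
Proof. by rewrite /ee gn0 !mulr1. Qed.

Lemma E1 b s : ee b.+1 s.+1 = ee b s.+1 - z ^+ b * ee b s.
Proof.
rewrite /ee gB; case: (leqP s b) => sb; last first.
  have g1 : gbinom z b s = 0 := ggt _ _ _ sb.
  have g2 : gbinom z b s.+1 = 0 by apply: ggt; lia.
  rewrite g1 g2; ring.
have -> : z ^+ b = z ^+ (b - s) * z ^+ s by rewrite -exprD subnK.
rewrite binS bin1 exprD !exprS; ring.
Qed.

Lemma L2 b x : \prod_(l < b) (1 - x * z ^+ l) = \sum_(s < b.+1) ee b s * x ^+ s.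
Proof.
elim: b => [|b IH]; first by rewrite big_ord0 big_ord1 ee0 mulr1.
have T2 : \sum_(s < b.+1) ee b s * x ^+ s = 1 + \sum_(s < b.+1) ee b s.+1 * x ^+ s.+1.
  rewrite big_ord_recl [in RHS]big_ord_recr /= ee0 expr0 mulr1 ee_gt // mul0r addr0.
  by [].
rewrite big_ord_recr /= IH [in RHS]big_ord_recl /= ee0 expr0 mulr1.
under [in RHS]eq_bigr do rewrite E1 mulrBl.
rewrite sumrB addrA -T2.
have -> : \sum_(i < b.+1) z ^+ b * ee b i * x ^+ i.+1 = z ^+ b * x * \sum_(s < b.+1) ee b s * x ^+ s.
  rewrite mulr_sumr; apply: eq_bigr => i _; rewrite exprS; ring.
ring.
Qed.

Lemma sum_widen n N (F : nat -> algC) : (n <= N)%N -> (forall s, (n <= s)%N -> F s = 0) ->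
  \sum_(s < n) F s = \sum_(s < N) F s.
Proof.
move=> nN h; rewrite (big_ord_widen N F nN) big_mkcond /=; apply: eq_bigr => s _.
by case: ifP => // /negbT; rewrite -leqNgt => /h ->.
Qed.

Lemma L2w b N x : (b < N)%N -> \prod_(l < b) (1 - x * z ^+ l) = \sum_(s < N) ee b s * x ^+ s.
Proof.
move=> bN; rewrite L2.
have := sum_widen (b.+1) N (fun s : nat => ee b s * x ^+ s) bN; apply => s hs.
by rewrite ee_gt // mul0r.
Qed.

Lemma EqS a : Eq a.+1 = Eq a * (1 - q ^+ a.+1).
Proof. by rewrite /Eq big_nat_recr. Qed.

Lemma Eq0 : Eq 0 = 1.
Proof. by rewrite /Eq big_geq. Qed.

Lemma L1 i a : gbinom q i a * Eq a = \prod_(l < a) (1 - q ^+ i * z ^+ l).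
Proof.
elim: i a => [|i IH] [|a].
- by rewrite gn0 Eq0 big_ord0 mulr1.
- by rewrite ggt // mul0r big_ord_recl /= !expr0 mulr1 subrr mul0r.
- by rewrite gn0 Eq0 big_ord0 mulr1.
set R := \prod_(l < a) (1 - q ^+ i * z ^+ l).
have h1 := IH a; have h2 := IH a.+1.
rewrite big_ord_recr /= -/R in h2.
rewrite gA.
have -> : (gbinom q i a + q ^+ a.+1 * gbinom q i a.+1) * Eq a.+1 =
   gbinom q i a * Eq a * (1 - q ^+ a.+1) + q ^+ a.+1 * (gbinom q i a.+1 * Eq a.+1).
  by rewrite !EqS; ring.
rewrite h1 h2 big_ord_recl /=.
have P2 : \prod_(l < a) (1 - q ^+ i.+1 * z ^+ bump 0 l) = R.
  apply: eq_bigr => l _.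
  have -> : q ^+ i.+1 * z ^+ (bump 0 l) = (q * z) * (q ^+ i * z ^+ l).
    rewrite /bump /= !exprS; ring.
  by rewrite qz mul1r.
rewrite P2 -/R.
transitivity (R - R * q * q ^+ i * (q ^+ a * z ^+ a)); first by rewrite !exprS; ring.
rewrite qpow expr0 exprS; ring.
Qed.
Lemma Wsum (i b : nat) : (i < m)%N -> (b < m)%N ->
  \sum_(j < m) z ^+ (i * j) * gbinom q j b = m%:R * ee b i / Eq b.
Proof.
move=> im bm.
have gj : forall j : nat, gbinom q j b = (\sum_(s < m) ee b s * (q ^+ j) ^+ s) / Eq b.
  by move=> j; rewrite -(L2w b m (q ^+ j) bm) -L1 mulfK // Eq_neq0.
under eq_bigr do rewrite gj.
transitivity (\sum_(j < m) \sum_(s < m) ee b s * (z ^+ i * q ^+ s) ^+ j / Eq b).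
  apply: eq_bigr => j _; rewrite mulrA mulr_sumr mulr_suml; apply: eq_bigr => s _.
  rewrite exprMn -!exprM (mulnC s j); ring.
rewrite exchange_big /=.
transitivity (\sum_(s < m) ee b s * (\sum_(j < m) (z ^+ i * q ^+ s) ^+ j) / Eq b).
  by apply: eq_bigr => s _; rewrite mulr_sumr mulr_suml.
under eq_bigr => s _ do rewrite (orth i s im (ltn_ord s)).
rewrite (bigD1 (Ordinal im)) //= eqxx big1 ?addr0; first by rewrite (mulrC (ee b i)).
move=> s hs; case: eqP => [e|]; last by rewrite mulr0 mul0r.
by case/eqP: hs; apply: val_inj; rewrite /= e.
Qed.

Local Notation G := (Gmx m q).
Local Notation V := (Vmx m z).
Local Notation M := ((Gmx m q)^T *m Vmx m z *m Gmx m q).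

Lemma VGE (i b : 'I_m) : (V *m G) i b = m%:R * ee b i / Eq b.
Proof.
rewrite mxE -Wsum //; apply: eq_bigr => j _; by rewrite !mxE.
Qed.

Lemma Msum (a b : 'I_m) : M a b = \sum_(i < m) gbinom q i a * (m%:R * ee b i / Eq b).
Proof.
rewrite -mulmxA mxE; apply: eq_bigr => i _; by rewrite VGE !mxE.
Qed.

Lemma Msym : M^T = M.
Proof.
have VT : V^T = V by apply/matrixP => i j; rewrite !mxE mulnC.
by rewrite !trmx_mul trmxK VT mulmxA.
Qed.

Lemma M_lt (a b : 'I_m) : (b < a)%N -> M a b = 0.
Proof.
move=> ba; rewrite Msum big1 // => i _.
case: (ltnP i a) => ia; first by rewrite ggt // mul0r.
rewrite ee_gt; first by rewrite mulr0 mul0r mulr0.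
exact: leq_trans ba ia.
Qed.

Lemma diagU a : (-1) ^+ a * z ^+ 'C(a, 2) = z ^+ (a ^ 2) * Uq a.
Proof.
elim: a => [|a IH]; first by rewrite /Uq big_geq // !expr0 mulr1.
rewrite /Uq big_nat_recr //= -/(Uq a).
have -> : (a.+1 ^ 2 = a ^ 2 + a + a.+1)%N by lia.
rewrite binS bin1 !exprD.
transitivity (- ((-1) ^+ a * z ^+ 'C(a, 2)) * z ^+ a); first by rewrite exprS; ring.
rewrite IH.
transitivity (- (z ^+ (a ^ 2) * Uq a) * z ^+ a * (q ^+ a.+1 * z ^+ a.+1)).
  by rewrite qpow mulr1.
ring.
Qed.

Lemma Mdiag (a : 'I_m) : M a a = m%:R * z ^+ (a ^ 2) / Pz a.
Proof.
rewrite Msum (bigD1 a) //= big1 ?addr0.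
  rewrite gnn mul1r EUP /ee gnn mulr1 diagU.
  have U0 := Uq_neq0 a; have P0 := Pz_neq0 a (ltn_ord a).
  field; apply/andP; split => //.
move=> i ia; case: (ltngtP i a) => h.
- by rewrite ggt // mul0r.
- by rewrite ee_gt // mulr0 mul0r mulr0.
- by case/eqP: ia; apply: val_inj.
Qed.

Lemma Mentry (a b : 'I_m) : M a b = if a == b then m%:R * z ^+ (a ^ 2) / Pz a else 0.
Proof.
case: eqP => [<-|ne]; first exact: Mdiag.
case: (ltngtP a b) => h.
- by rewrite -Msym mxE M_lt.
- by rewrite M_lt.
- by case: ne; apply: val_inj.
Qed.
Definition dd i := qfact q i * (q - 1) ^+ i * q ^+ 'C(i, 2).

Lemma dval i : dd i * z ^+ (i ^ 2) = Pz i.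
Proof.
elim: i => [|i IH]; first by rewrite /dd /Pz big_geq // qfact0 !expr0 !mulr1.
rewrite /Pz big_nat_recr //= -/(Pz i) -IH /dd qfactS.
have -> : (i.+1 ^ 2 = i ^ 2 + i + i.+1)%N by lia.
rewrite binS bin1 !exprD.
have S : (q - 1) * \sum_(k < i.+1) q ^+ k = q ^+ i.+1 - 1 by rewrite subrX1.
transitivity (qfact q i * (q - 1) ^+ i * q ^+ 'C(i, 2) * z ^+ (i ^ 2) *
   ((q - 1) * \sum_(k < i.+1) q ^+ k) * (q ^+ i * z ^+ i) * z ^+ i.+1).
  by rewrite exprS; ring.
rewrite S qpow mulr1 -mulrA; congr (_ * _).
by rewrite mulrBl qpow mul1r.
Qed.

Lemma dd_neq0 (i : 'I_m) : dd i != 0.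
Proof.
apply/eqP => h; have := Pz_neq0 i (ltn_ord i).
by rewrite -dval h mul0r eqxx.
Qed.

Lemma invD : invmx (Dmx m q) = diag_mx (\row_(i < m) (dd i)^-1).
Proof.
have H : Dmx m q *m diag_mx (\row_(i < m) (dd i)^-1) = 1%:M.
  rewrite /Dmx mulmx_diag; apply/matrixP => i j; rewrite !mxE.
  by rewrite -/(dd i) divff ?dd_neq0.
have [UD _] := mulmx1_unit H.
by rewrite -[RHS](mulKmx UD) H mulmx1.
Qed.

Lemma part1 : M = m%:R *: invmx (Dmx m q).
Proof.
apply/matrixP => i j; rewrite Mentry invD !mxE.
case: ifP => [/eqP e|/negbT ne].
  subst j; rewrite mulr1n -(dval i).
have := dd_neq0 i; have : z ^+ (i ^ 2) != 0 by rewrite expf_neq0 // z_neq0.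
  move=> h1 h2; field; apply/andP; split => //.
by rewrite mulr0n mulr0.
Qed.

Local Notation Zz := (in_Zzeta z).

Lemma Z0 : Zz 0.
Proof. by exists 0; rewrite rmorph0 horner0. Qed.

Lemma Z1 : Zz 1.
Proof. by exists 1; rewrite rmorph1 hornerC. Qed.

Lemma ZD x y : Zz x -> Zz y -> Zz (x + y).
Proof. by move=> [p ->] [r ->]; exists (p + r); rewrite rmorphD hornerD. Qed.

Lemma ZM x y : Zz x -> Zz y -> Zz (x * y).
Proof. by move=> [p ->] [r ->]; exists (p * r); rewrite rmorphM hornerM. Qed.

Lemma ZN x : Zz x -> Zz (- x).
Proof. by move=> [p ->]; exists (- p); rewrite rmorphN hornerN. Qed.

Lemma Zzz : Zz z.
Proof. by exists 'X; rewrite map_polyX hornerX. Qed.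

Lemma ZX x n : Zz x -> Zz (x ^+ n).
Proof. by move=> h; elim: n => [|n IH]; [rewrite expr0; exact: Z1 | rewrite exprS; exact: ZM]. Qed.

Lemma Zq : Zz q.
Proof.
have -> : q = z ^+ m.-1.
  by apply: (mulIf z_neq0); rewrite qz -exprSr prednK // zm.
exact: ZX Zzz.
Qed.

Lemma Zsum (I : finType) (P : pred I) (F : I -> algC) :
  (forall i, P i -> Zz (F i)) -> Zz (\sum_(i | P i) F i).
Proof. by move=> h; apply: big_ind => //; [exact: Z0 | exact: ZD]. Qed.

Lemma Zprod (I : finType) (P : pred I) (F : I -> algC) :
  (forall i, P i -> Zz (F i)) -> Zz (\prod_(i | P i) F i).
Proof. by move=> h; apply: big_ind => //; [exact: Z1 | exact: ZM]. Qed.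

Lemma Zprodn (a b : nat) (F : nat -> algC) :
  (forall i, Zz (F i)) -> Zz (\prod_(a <= i < b) F i).
Proof. by move=> h; apply: big_ind => //; [exact: Z1 | exact: ZM]. Qed.

Lemma Zm1 n : Zz ((-1) ^+ n).
Proof. apply: ZX; apply: ZN; exact: Z1. Qed.

Lemma Zg n k : Zz (gbinom q n k).
Proof.
elim: n k => [|n IH] [|k].
- rewrite gn0; exact: Z1.
- rewrite ggt //; exact: Z0.
- rewrite gn0; exact: Z1.
rewrite gA; apply: ZD => //; apply: ZM => //; apply: ZX; exact: Zq.
Qed.

Lemma ZUq j : Zz (Uq j).
Proof. by apply: Zprodn => i; apply: ZN; apply: ZX; exact: Zq. Qed.

Lemma ZUz j : Zz (Uz j).
Proof. by apply: Zprodn => i; apply: ZN; apply: ZX; exact: Zzz. Qed.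

Lemma Zadj n (A : 'M[algC]_n) : (forall i j, Zz (A i j)) -> forall i j, Zz (\adj A i j).
Proof.
move=> h i j; rewrite /adjugate mxE expand_cofactor.
apply: Zsum => s _; apply: ZM; first exact: Zm1.
by apply: Zprod => k _; apply: h.
Qed.

Lemma Gtrig : is_trig_mx G.
Proof. by apply/is_trig_mxP => i j ij; rewrite mxE ggt. Qed.

Lemma detG : \det G = 1.
Proof. by rewrite det_trig ?Gtrig // big1 // => i _; rewrite mxE gnn. Qed.

Lemma unitG : G \in unitmx.
Proof. by rewrite unitmxE detG unitr1. Qed.

Lemma invG : invmx G = \adj G.
Proof. by rewrite /invmx unitG detG invr1 scale1r. Qed.

Lemma ZinvG i j : Zz (invmx G i j).
Proof. by rewrite invG; apply: Zadj => a b; rewrite mxE; exact: Zg. Qed.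
Lemma omegaE (a : 'I_m -> algC) (j : 'I_m) : omega z a j = (V *m \col_k a k) j 0.
Proof. by rewrite /omega mxE; apply: eq_bigr => k _; rewrite !mxE exprM mulrC. Qed.

Lemma MmulE (c : 'cV_m) (i : 'I_m) : (M *m c) i 0 = m%:R * z ^+ (i ^ 2) / Pz i * c i 0.
Proof.
rewrite mxE (bigD1 i) //= big1 ?addr0; first by rewrite Mentry eqxx.
by move=> j ji; rewrite Mentry eq_sym (negbTE ji) mul0r.
Qed.

Lemma sumGE (y : 'I_m -> algC) (i : 'I_m) :
  \sum_(j < m | (i <= j)%N) y j * gbinom q j i = (G^T *m \col_k y k) i 0.
Proof.
rewrite mxE big_mkcond /=; apply: eq_bigr => j _; rewrite !mxE.
case: leqP => h; first by rewrite mulrC.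
by rewrite ggt // mul0r.
Qed.

Lemma Zomega (a : 'I_m -> algC) : (forall k, Zz (a k)) -> forall j, Zz (omega z a j).
Proof.
move=> h j; apply: Zsum => k _; apply: ZM => //; apply: ZX; apply: ZX; exact: Zzz.
Qed.

Lemma part2 (y : 'I_m -> algC) :
  omega_image z y <->
  ((forall j, Zz (y j)) /\
   forall i : 'I_m, exists zz : algC, Zz zz /\
     \sum_(j < m | (i <= j)%N) y j * gbinom q j i =
     zz * (m%:R / \prod_(1 <= l < i.+1) (1 - z ^+ l))).
Proof.
split.
  move=> [a [Za Hy]]; split; first by move=> j; rewrite Hy; apply: Zomega.
  move=> i; set c := invmx G *m \col_k a k.
  have cva : \col_k a k = G *m c by rewrite /c mulKVmx // unitG.
  have ycv : \col_k y k = V *m \col_k a k.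
    by apply/matrixP => j k; rewrite (ord1 k) [LHS]mxE Hy omegaE.
  have E : G^T *m \col_k y k = M *m c by rewrite ycv cva !mulmxA.
  exists (z ^+ (i ^ 2) * c i 0); split.
    apply: ZM; first by apply: ZX; exact: Zzz.
    rewrite /c mxE; apply: Zsum => k _; apply: ZM; first exact: ZinvG.
    by rewrite mxE.
  rewrite sumGE E MmulE -/(Pz i); ring.
move=> [Zy H].
have [zf Hz] : exists zf : 'I_m -> algC, forall i, Zz (zf i) /\
     \sum_(j < m | (i <= j)%N) y j * gbinom q j i = zf i * (m%:R / Pz i).
  exists (fun i => proj1_sig (constructive_indefinite_description _ (H i))).
  by move=> i; exact: (proj2_sig (constructive_indefinite_description _ (H i))).
set c : 'cV_m := \col_i (zf i * q ^+ (i ^ 2)).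
set a := G *m c.
exists (fun k => a k 0); split.
  move=> k; rewrite /a mxE; apply: Zsum => j _; apply: ZM; first by rewrite mxE; exact: Zg.
  rewrite mxE; apply: ZM; first exact: (Hz j).1.
  apply: ZX; exact: Zq.
have E : G^T *m (V *m a) = G^T *m \col_k y k.
  rewrite /a !mulmxA; apply/matrixP => i k; rewrite (ord1 k) MmulE -sumGE (Hz i).2 mxE.
  transitivity (zf i * (m%:R / Pz i) * (z ^+ (i ^ 2) * q ^+ (i ^ 2))); first by ring.
  by rewrite zpow mulr1.
have UGt : G^T \in unitmx by rewrite unitmx_tr unitG.
move/(congr1 (mulmx (invmx G^T))): E; rewrite !mulKmx // => E.
move=> j; rewrite omegaE.
have -> : \col_k a k 0 = a by apply/matrixP => k l; rewrite (ord1 l) mxE.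
by rewrite E mxE.
Qed.
Definition bb (j k : 'I_m) : algC :=
  (-1) ^+ k * z ^+ 'C(k, 2) * (m%:R / \prod_(1 <= l < j.+1) (1 - z ^+ l)) * gbinom z j k.

Lemma bW (j k : 'I_m) : bb j k = Uq j * (V *m G) k j.
Proof.
rewrite /bb VGE EUP /ee -/(Pz j).
have U0 := Uq_neq0 j; have P0 := Pz_neq0 j (ltn_ord j).
field; apply/andP; split => //.
Qed.

Lemma part3a (j : 'I_m) : omega_image z (bb j).
Proof.
exists (fun k => Uq j * gbinom q k j); split.
  by move=> k; apply: ZM; [exact: ZUq | exact: Zg].
move=> l; rewrite omegaE bW !mxE mulr_sumr; apply: eq_bigr => k _.
by rewrite !mxE; ring.
Qed.

Lemma part3b (y : 'I_m -> algC) : omega_image z y ->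
  exists a : 'I_m -> algC, (forall j, Zz (a j)) /\
    forall k, y k = \sum_(j < m) a j * bb j k.
Proof.
move=> [a [Za Hy]].
set c := invmx G *m \col_k a k.
have cva : \col_k a k = G *m c by rewrite /c mulKVmx // unitG.
exists (fun j => c j 0 * Uz j); split.
  move=> j; apply: ZM; last exact: ZUz.
  rewrite /c mxE; apply: Zsum => k _; apply: ZM; first exact: ZinvG.
  by rewrite mxE.
move=> k; rewrite Hy omegaE cva mulmxA mxE; apply: eq_bigr => j _.
rewrite bW.
transitivity (c j 0 * (Uq j * Uz j) * (V *m G) k j); last by ring.
by rewrite UU mulr1 mulrC.
Qed.

Lemma part3c (a : 'I_m -> algC) :
  (forall k, \sum_(j < m) a j * bb j k = 0) -> forall j, a j = 0.
Proof.
move=> h j.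
set v : 'cV_m := \col_j (Uq j * a j).
have W0 : (V *m G) *m v = 0.
  apply/matrixP => k l; rewrite (ord1 l) !mxE; transitivity (\sum_(i < m) a i * bb i k); last exact: h.
  apply: eq_bigr => i _.
  by rewrite [v i 0]mxE bW; ring.
have M0 : M *m v = 0 by rewrite -!mulmxA (mulmxA V) W0 !mulmx0.
have := MmulE v j; rewrite M0 mxE mxE => /esym /eqP.
have nz : m%:R * z ^+ (j ^ 2) / Pz j * Uq j != 0.
  rewrite !mulf_neq0 ?invr_eq0 ?Pz_neq0 ?Uq_neq0 ?expf_neq0 ?z_neq0 //.
  by rewrite pnatr_eq0 -lt0n.
by rewrite mulrA mulf_eq0 (negbTE nz) /= => /eqP.
Qed.

Lemma main_sec :
  ((Gmx m z^-1)^T *m Vmx m z *m Gmx m z^-1 = m%:R *: invmx (Dmx m z^-1)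
   /\ forall i j : 'I_m,
       ((Gmx m z^-1)^T *m Vmx m z *m Gmx m z^-1) i j =
       (if i == j then
          m%:R * z ^+ (i ^ 2) / \prod_(1 <= l < i.+1) (1 - z ^+ l)
        else 0))
  /\ (forall y : 'I_m -> algC,
        omega_image z y <->
        ((forall j, in_Zzeta z (y j)) /\
         forall i : 'I_m, exists zz : algC, in_Zzeta z zz /\
           \sum_(j < m | (i <= j)%N) y j * gbinom z^-1 j i =
           zz * (m%:R / \prod_(1 <= l < i.+1) (1 - z ^+ l))))
  /\ (let b (j k : 'I_m) : algC :=
        (-1) ^+ k * z ^+ 'C(k, 2) * (m%:R / \prod_(1 <= l < j.+1) (1 - z ^+ l))
        * gbinom z j k in
      (forall j, omega_image z (b j))
      /\ (forall y, omega_image z y ->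
            exists a : 'I_m -> algC, (forall j, in_Zzeta z (a j)) /\
              forall k, y k = \sum_(j < m) a j * b j k)
      /\ (forall a : 'I_m -> algC, (forall j, in_Zzeta z (a j)) ->
            (forall k, \sum_(j < m) a j * b j k = 0) -> forall j, a j = 0)).
Proof.
split; first by split; [exact: part1 | exact: Mentry].
split; first exact: part2.
split; first exact: part3a.
split; first exact: part3b.
by move=> a _; exact: part3c.
Qed.
End RU.

Theorem proposition3p8 (m : nat) (zeta : algC) (hm : (0 < m)%N)
    (hzeta : m.-primitive_root zeta) :
  (* (i) *)
  ((Gmx m zeta^-1)^T *m Vmx m zeta *m Gmx m zeta^-1 = m%:R *: invmx (Dmx m zeta^-1)
   /\ forall i j : 'I_m,
       ((Gmx m zeta^-1)^T *m Vmx m zeta *m Gmx m zeta^-1) i j =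
       (if i == j then
          m%:R * zeta ^+ (i ^ 2) / \prod_(1 <= l < i.+1) (1 - zeta ^+ l)
        else 0))
  (* (ii) *)
  /\ (forall y : 'I_m -> algC,
        omega_image zeta y <->
        ((forall j, in_Zzeta zeta (y j)) /\
         forall i : 'I_m, exists z : algC, in_Zzeta zeta z /\
           \sum_(j < m | (i <= j)%N) y j * gbinom zeta^-1 j i =
           z * (m%:R / \prod_(1 <= l < i.+1) (1 - zeta ^+ l))))
  (* (iii) *)
  /\ (let b (j k : 'I_m) : algC :=
        (-1) ^+ k * zeta ^+ 'C(k, 2) * (m%:R / \prod_(1 <= l < j.+1) (1 - zeta ^+ l))
        * gbinom zeta j k in
      (forall j, omega_image zeta (b j))
      /\ (forall y, omega_image zeta y ->
            exists a : 'I_m -> algC, (forall j, in_Zzeta zeta (a j)) /\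
              forall k, y k = \sum_(j < m) a j * b j k)
      /\ (forall a : 'I_m -> algC, (forall j, in_Zzeta zeta (a j)) ->
            (forall k, \sum_(j < m) a j * b j k = 0) -> forall j, a j = 0)).
Proof. exact: (@main_sec m zeta hm hzeta). Qed.
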